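(* Let $\mathcal{F}$ be a filtration of a finite simplicial complex and $\sigma\notin\mathcal{F}$ a simplex such that $\mathcal{F}\cup\sigma$ (the filtration with $\sigma$ inserted at some filtration value) is a valid filtration. For $\alpha\in(1,\infty)$ and $k\ge1$ let $\Pi_k(\alpha;\mathcal{F})$ be the number of points $(b,d)\in\mathrm{dgm}_k(\mathcal{F})$ with $d/b\ge\alpha$. If $\dim\sigma\in\{k,k+1\}$, then \[ \Pi_k(\alpha;\mathcal{F})-1\le\Pi_k(\alpha;\mathcal{F}\cup\sigma)\le\Pi_k(\alpha;\mathcal{F})+1; \] otherwise $\Pi_k(\alpha;\mathcal{F}\cup\sigma)=\Pi_k(\alpha;\mathcal{F})$.
   Context: A filtration assigns to each simplex a filtration value $w$ such that faces enter no later than their cofaces; the $k$-th persistent homology (field coefficients) decomposes into intervals $[b,d)$ with $b<d\le\infty$, and $\mathrm{dgm}_k$ is the multiset of such $(b,d)$. Filtration values of the simplices contributing births are taken positive so that the ratio $d/b$ is defined, with $d=\infty$ giving ratio $\infty$. Ties between simplices with equal filtration values are broken by an arbitrary but consistent total order. *)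

(* Defs.v *)
From HB Require Import structures.
From mathcomp Require Import all_boot all_order all_algebra.
Set Implicit Arguments. Unset Strict Implicit. Unset Printing Implicit Defensive.
Import Order.TTheory GRing.Theory Num.Theory.
Local Open Scope ring_scope.

(* Simplices on the vertex set 'I_m are nonempty subsets of 'I_m.
   A (simplexwise) filtration is a sequence of (simplex, value) pairs; the order
   of the sequence is the total order refining the values (ties broken by the
   sequence order). *)

Definition sdim (m : nat) (s : {set 'I_m}) : nat := (#|s|).-1.

Section Filtration.
Variables (R : realFieldType) (m : nat).

Definition simps (f : seq ({set 'I_m} * R)) : seq {set 'I_m} := map fst f.
Definition wts (f : seq ({set 'I_m} * R)) : seq R := map snd f.

(* valid filtration: distinct nonempty simplices, values nondecreasing along
   the order, every nonempty proper face of a simplex occurs strictly earlier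
   (so the simplices form a finite simplicial complex and each prefix is a
   subcomplex). *)
Definition is_filtration (f : seq ({set 'I_m} * R)) : Prop :=
  [/\ uniq (simps f),
      all (fun s => s != set0) (simps f),
      sorted (fun x y : R => x <= y) (wts f) &
      forall i, (i < size f)%N -> forall t : {set 'I_m}, t != set0 ->
        t \proper nth set0 (simps f) i ->
        exists2 j, (j < i)%N & nth set0 (simps f) j = t ].

(* filtration values of all simplices of dimension >= 1 are positive
   (these are the only simplices that can contribute births in degree k >= 1) *)
Definition births_positive (f : seq ({set 'I_m} * R)) : Prop :=
  forall i, (i < size f)%N -> (1 <= sdim (nth set0 (simps f) i))%N ->
    0 < nth 0 (wts f) i.

Definition finsert (p : nat) (x : {set 'I_m} * R) (f : seq ({set 'I_m} * R)) :=
  take p f ++ x :: drop p f.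

Variable F : fieldType.

(* coefficient of the face t in the oriented boundary of s
   (vertices ordered by their index) *)
Definition bcoef (s t : {set 'I_m}) : F :=
  \sum_(v in s | t == s :\ v) (-1) ^+ #|[set u in s | (val u < val v)%N]|.

Section Homology.
Variable f : seq ({set 'I_m} * R).
Local Notation n := (size f).
Local Notation s_ a := (nth set0 (simps f) a).

(* chains are row vectors indexed by the positions of the filtration;
   c *m Dmx is the boundary of c *)
Definition Dmx : 'M[F]_n := \matrix_(a < n, b < n) bcoef (s_ a) (s_ b).

(* row space = k-chains of K_i (the subcomplex of the first i simplices) *)
Definition Cmx (k i : nat) : 'M[F]_n :=
  \matrix_(a < n, b < n) ((a == b) && (a < i)%N && (sdim (s_ a) == k))%:R.

Definition Zmx (k i : nat) : 'M[F]_n := (Cmx k i :&: kermx Dmx)%MS.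
Definition Bmx (k j : nat) : 'M[F]_n := (Cmx k.+1 j *m Dmx)%MS.

(* persistent Betti number: rank of H_k(K_i) -> H_k(K_j), i <= j *)
Definition pbetti (k i j : nat) : int :=
  (\rank (Zmx k i))%:Z - (\rank (Zmx k i :&: Bmx k j)%MS)%:Z.

(* multiplicity of the index interval [i, j) (1 <= i < j <= n): class born
   when simplex s_(i-1) enters, dying when s_(j-1) enters *)
Definition pmult (k i j : nat) : int :=
  pbetti k i j.-1 - pbetti k i j - pbetti k i.-1 j.-1 + pbetti k i.-1 j.
Definition pmult_inf (k i : nat) : int := pbetti k i n - pbetti k i.-1 n.

(* Pi_k(alpha; f): number of points (b,d) of dgm_k with d/b >= alpha
   (b = value of s_(i-1) > 0, d = value of s_(j-1), or d = oo) *)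
Definition Pi (k : nat) (alpha : R) : int :=
  \sum_(1 <= i < n.+1) \sum_(i.+1 <= j < n.+1)
     (if alpha * nth 0 (wts f) i.-1 <= nth 0 (wts f) j.-1
      then pmult k i j else 0)
  + \sum_(1 <= i < n.+1) pmult_inf k i.
End Homology.
End Filtration.

(* Main.v *)
Require Import Defs.
From HB Require Import structures.
From mathcomp Require Import all_boot all_order all_algebra.
From mathcomp Require Import zify.
Set Implicit Arguments. Unset Strict Implicit. Unset Printing Implicit Defensive.
Import Order.TTheory GRing.Theory Num.Theory.
Local Open Scope ring_scope.


Section Emb.
Variables (F : fieldType) (n N : nat) (iota : 'I_n -> 'I_N) (q : 'I_N).
Hypothesis iota_inj : injective iota.
Hypothesis iota_q : forall a, iota a != q.
Hypothesis iota_surj : forall b, b != q -> exists a, iota a = b.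

Definition Emx : 'M[F]_(n,N) := \matrix_(a,b) (iota a == b)%:R.

Lemma mulEmx_iota (x : 'rV[F]_n) a : (x *m Emx) 0 (iota a) = x 0 a.
Proof.
rewrite mxE (bigD1 a) //= big1 ?addr0 => [|c nc]; rewrite !mxE ?eqxx ?mulr1 //.
by rewrite (inj_eq iota_inj) (negbTE nc) mulr0.
Qed.

Lemma mulEmx_q (x : 'rV[F]_n) : (x *m Emx) 0 q = 0.
Proof. by rewrite mxE big1 // => c _; rewrite !mxE (negbTE (iota_q c)) mulr0. Qed.

Lemma mulEtmx (u : 'rV[F]_N) a : (u *m Emx^T) 0 a = u 0 (iota a).
Proof.
rewrite mxE (bigD1 (iota a)) //= big1 ?addr0 => [|c nc]; rewrite !mxE ?eqxx ?mulr1 //.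
by rewrite eq_sym (negbTE nc) mulr0.
Qed.

Lemma EEt : Emx *m Emx^T = 1%:M.
Proof.
apply/matrixP => a a'; rewrite !mxE (bigD1 (iota a)) //= big1 ?addr0.
  by rewrite !mxE eqxx mul1r (inj_eq iota_inj) eq_sym.
by move=> c nc; rewrite !mxE eq_sym (negbTE nc) mul0r.
Qed.

Lemma Efree : row_free Emx.
Proof. by apply/row_freeP; exists Emx^T; exact: EEt. Qed.

Lemma mulEK m (x : 'M[F]_(m, n)) : x *m Emx *m Emx^T = x.
Proof. by rewrite -mulmxA EEt mulmx1. Qed.

Lemma subE (u : 'rV[F]_N) : (u <= Emx)%MS = (u 0 q == 0).
Proof.
apply/idP/idP.
  by case/submxP => w ->; rewrite mulEmx_q.
move=> /eqP uq; suff -> : u = u *m Emx^T *m Emx by apply: submxMl.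
apply/rowP => b; case: (eqVneq b q) => [->|nb]; first by rewrite mulEmx_q.
by have [a <-] := iota_surj nb; rewrite mulEmx_iota mulEtmx.
Qed.

Lemma vE (u : 'rV[F]_N) : (u <= Emx)%MS -> u = u *m Emx^T *m Emx.
Proof. by case/submxP => w ->; rewrite mulEK. Qed.

Lemma subME m (A : 'M[F]_(m, n)) (u : 'rV[F]_N) :
  (u <= A *m Emx)%MS = (u <= Emx)%MS && (u *m Emx^T <= A)%MS.
Proof.
apply/idP/andP => [|[uE sA]].
  case/submxP => w ->; rewrite mulmxA mulEK submxMl; split => //.
  exact: submxMl.
by rewrite (vE uE) submxMr.
Qed.

Lemma vec_eqmx m1 m2 (A : 'M[F]_(m1, N)) (B : 'M[F]_(m2, N)) :
  (forall u : 'rV[F]_N, (u <= A)%MS = (u <= B)%MS) -> (A :=: B)%MS.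
Proof.
move=> H; apply/eqmxP; apply/andP; split; apply/row_subP => i.
  by rewrite -H row_sub.
by rewrite H row_sub.
Qed.

Lemma capME (A B : 'M[F]_n) : ((A :&: B)%MS *m Emx :=: (A *m Emx) :&: (B *m Emx))%MS.
Proof.
apply: vec_eqmx => u; rewrite sub_capmx !subME sub_capmx.
by case: (u <= Emx)%MS.
Qed.

Lemma kerME (D : 'M[F]_n) (D' : 'M[F]_N) :
  Emx *m D' = D *m Emx -> (kermx D *m Emx :=: kermx D' :&: Emx)%MS.
Proof.
move=> ED; apply: vec_eqmx => u; rewrite sub_capmx subME !sub_kermx andbC.
case uE: (u <= Emx)%MS; rewrite ?andbT ?andbF //.
rewrite [in RHS](vE uE) -(mulmxA (u *m Emx^T)) ED mulmxA.
apply/eqP/eqP => [->|h]; first by rewrite mul0mx.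
by rewrite -(mulEK (u *m Emx^T *m D)) h mul0mx.
Qed.

Definition dg M (c : pred 'I_M) : 'M[F]_M := \matrix_(a, b) ((a == b) && c a)%:R.

Lemma mul_dg M (c : pred 'I_M) (u : 'rV[F]_M) :
  u *m dg c = \row_b (if c b then u 0 b else 0).
Proof.
apply/rowP => b; rewrite !mxE (bigD1 b) //= big1 ?addr0 => [|a na]; rewrite !mxE.
  by rewrite eqxx /=; case: (c b); rewrite ?mulr1 ?mulr0.
by rewrite (negbTE na) mulr0.
Qed.

Lemma dg_idem M (c : pred 'I_M) : dg c *m dg c = dg c.
Proof.
apply/matrixP => a b; rewrite !mxE (bigD1 a) //= big1 ?addr0 => [|d nd]; rewrite !mxE.
  rewrite eqxx /=; case: (a == b) => /=; case: (c a) => /=; by rewrite ?mulr1 ?mulr0 ?mul0r.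
by rewrite eq_sym (negbTE nd) mul0r.
Qed.

Lemma sub_dg M (c : pred 'I_M) (u : 'rV[F]_M) :
  (u <= dg c)%MS = [forall b, ~~ c b ==> (u 0 b == 0)].
Proof.
apply/idP/forallP => [|H].
  case/submxP => w uw b; apply/implyP => nc.
  have : u *m dg c = u by rewrite uw -mulmxA dg_idem.
  by move/rowP/(_ b); rewrite mul_dg mxE (negbTE nc) => <-.
suff -> : u = u *m dg c by apply: submxMl.
apply/rowP => b; rewrite mul_dg mxE; case cb: (c b) => //.
by move: (H b); rewrite cb => /eqP.
Qed.

Lemma dgE (c : pred 'I_n) (c' : pred 'I_N) :
  (forall a, c' (iota a) = c a) -> (dg c *m Emx :=: dg c' :&: Emx)%MS.
Proof.
move=> cc; apply: vec_eqmx => u; rewrite subME sub_capmx andbC subE !sub_dg.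
case uq: (u 0 q == 0); rewrite ?andbT ?andbF //.
apply/forallP/forallP => H b.
  apply/implyP => nc; case: (eqVneq b q) => [->//|nb].
  have [a ea] := iota_surj nb; move: (H a); rewrite -cc ea nc /= mulEtmx ea //.
by apply/implyP => nc; rewrite mulEtmx; move: (H (iota b)); rewrite cc nc.
Qed.

Lemma capE_id m (A : 'M[F]_(m, N)) : (A <= Emx)%MS -> (A :&: Emx :=: A)%MS.
Proof. by move/capmx_idPl. Qed.

Lemma ED_comm (D : 'M[F]_n) (D' : 'M[F]_N) :
  (forall a b, D' (iota a) (iota b) = D a b) -> (forall a, D' (iota a) q = 0) ->
  Emx *m D' = D *m Emx.
Proof.
move=> hD hq; apply/matrixP => a b; rewrite !mxE (bigD1 (iota a)) //= big1 ?addr0; last first.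
  by move=> c nc; rewrite !mxE eq_sym (negbTE nc) mul0r.
rewrite !mxE eqxx mul1r; case: (eqVneq b q) => [->|nb].
  by rewrite hq big1 // => c _; rewrite !mxE (negbTE (iota_q c)) mulr0.
have [c0 <-] := iota_surj nb; rewrite hD (bigD1 c0) //= big1 ?addr0; last first.
  by move=> c nc; rewrite !mxE (inj_eq iota_inj) (negbTE nc) mulr0.
by rewrite !mxE eqxx mulr1.
Qed.

Lemma dg_mul M (c1 c2 : pred 'I_M) : dg c1 *m dg c2 = dg (predI c1 c2).
Proof.
apply/matrixP => a b; rewrite !mxE (bigD1 a) //= big1 ?addr0 => [|d nd]; rewrite !mxE.
  by rewrite eqxx /=; case: (c1 a); case: (a == b); case: (c2 a); rewrite /= ?mul1r ?mul0r.
by rewrite eq_sym (negbTE nd) mul0r.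
Qed.

Lemma dg_sub M (c1 c2 : pred 'I_M) : (forall b, c1 b -> c2 b) -> (dg c1 <= dg c2)%MS.
Proof.
move=> h; have -> : dg c1 = dg c1 *m dg c2 by rewrite dg_mul; apply/matrixP => a b;
  rewrite !mxE /=; case: (c1 a) (h a) => //= ->.
exact: submxMl.
Qed.

Lemma dg_split M (c c1 c2 : pred 'I_M) : (forall b, c b = c1 b || c2 b) ->
  (forall b, ~~ (c1 b && c2 b)) -> (dg c :=: dg c1 + dg c2)%MS.
Proof.
move=> hc hd; apply/eqmxP/andP; split; last first.
  by rewrite addsmx_sub !dg_sub // => b; rewrite hc => ->; rewrite ?orbT.
have -> : dg c = dg c1 + dg c2.
  apply/matrixP => a b; rewrite !mxE hc; move: (hd a).
  by case: (c1 a); case: (c2 a); case: (a == b); rewrite //= ?addr0 ?add0r.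
by apply: addmx_sub_adds.
Qed.

Lemma dg_capE (c : pred 'I_N) :
  (dg (fun b => c b && (b != q)) :=: dg c :&: Emx)%MS.
Proof.
apply: vec_eqmx => u; rewrite sub_capmx subE !sub_dg.
apply/forallP/andP => [H|[/forallP H1 H2]].
  split; last by move: (H q); rewrite eqxx andbF.
  by apply/forallP => b; apply/implyP => nc; move: (H b); rewrite (negbTE nc).
move=> b; apply/implyP; case: (eqVneq b q) => [->//|nb]; rewrite andbT => nc.
by move: (H1 b); rewrite nc.
Qed.

Lemma capcapE m1 m2 m3 (A : 'M[F]_(m1, N)) (B : 'M[F]_(m2, N)) (C : 'M[F]_(m3, N)) :
  ((A :&: C) :&: (B :&: C) :=: (A :&: B) :&: C)%MS.
Proof.
apply: vec_eqmx => u; rewrite !sub_capmx.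
by case: (u <= A)%MS; case: (u <= B)%MS; case: (u <= C)%MS.
Qed.

End Emb.


Section Ranks.
Variables (F : fieldType) (N : nat).

Lemma rank_submod m1 m2 m3 (X : 'M[F]_(m1, N)) (Y : 'M[F]_(m2, N)) (W : 'M[F]_(m3, N)) :
  (X <= Y)%MS -> (\rank (Y + W) + \rank X <= \rank (X + W) + \rank Y)%N.
Proof.
move=> sXY; have h := mxrank_sum_cap Y (X + W)%MS.
have e : (Y + (X + W) :=: Y + W)%MS.
  apply/eqmxP/andP; split; rewrite !addsmx_sub.
    by rewrite addsmxSl (submx_trans sXY (addsmxSl _ _)) addsmxSr.
  by rewrite addsmxSl (submx_trans (addsmxSr X W) (addsmxSr _ _)).
rewrite e in h; rewrite [X in (_ <= X)%N]addnC -h leq_add2l.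
apply: mxrankS; rewrite sub_capmx sXY; exact: addsmxSl.
Qed.

Lemma rank_adds_le m1 m2 (X : 'M[F]_(m1, N)) (W : 'M[F]_(m2, N)) :
  (\rank (X + W) <= \rank X + \rank W)%N.
Proof. by rewrite -mxrank_sum_cap leq_addr. Qed.

Lemma rank_cap_trick m1 m2 m3 m4 (X : 'M[F]_(m1, N)) (Y : 'M[F]_(m2, N))
   (E : 'M[F]_(m3, N)) (B : 'M[F]_(m4, N)) :
  (X :=: Y :&: E)%MS -> (B <= E)%MS ->
  (\rank (Y + B) + \rank X = \rank (X + B) + \rank Y)%N.
Proof.
move=> eX sBE.
have e : (X :&: B :=: Y :&: B)%MS.
  apply/eqmxP; apply/andP; split.
    by apply: capmxS => //; rewrite eX capmxSl.
  rewrite sub_capmx capmxSr andbT eX sub_capmx capmxSl /=.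
  exact: submx_trans (capmxSr _ _) sBE.
have h1 := mxrank_sum_cap Y B; have h2 := mxrank_sum_cap X B.
rewrite e in h2.
move: h1 h2; lia.
Qed.

Lemma rank_hyper n m (Y : 'M[F]_(m, N)) (E : 'M[F]_(n, N)) :
  N = n.+1 -> row_free E -> (\rank Y <= \rank (Y :&: E) + 1)%N.
Proof.
move=> eN fE; have := mxrank_sum_cap Y E.
rewrite (eqP fE) => h.
have h2 : (\rank (Y + E)%MS <= n.+1)%N by rewrite -eN rank_leq_col.
move: h h2; lia.
Qed.

End Ranks.


Lemma tele_lem (u : nat -> int) (a i n : nat) : (i <= n)%N -> (a <= n)%N ->
  \sum_(i.+1 <= j < n.+1) (if (a < j)%N then u j.-1 - u j else 0) + u n = u (maxn i a).
Proof.
elim: n i a => [|n IH] i a.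
  by rewrite !leqn0 => /eqP -> /eqP ->; rewrite big_geq // add0r.
move=> hi ha; case: (eqVneq i n.+1) => [ei|ni].
  by rewrite ei big_geq // add0r (maxn_idPl ha).
have {}hi : (i <= n)%N by lia.
case: (eqVneq a n.+1) => [ea|na].
  rewrite ea big1_seq ?add0r; first by rewrite (maxn_idPr _) // ltnW.
  move=> j; rewrite mem_index_iota => /andP[_ hj].
  by rewrite ifN // -leqNgt; lia.
have {}ha : (a <= n)%N by lia.
rewrite big_nat_recr /= ?ltnS //.
rewrite ifT; last by lia.
by rewrite -(IH i a hi ha) /= -addrA subrK.
Qed.

Lemma find_sorted_le (R : realFieldType) (w : seq R) (c : R) j :
  sorted (fun x y : R => x <= y) w -> (j < size w)%N ->
  (c <= nth 0 w j) = (find (fun x => (c <= x)%R) w <= j)%N.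
Proof.
move=> sw hj; case: (ltnP j (find (fun x => (c <= x)%R) w)) => h.
  by rewrite before_find.
have hf : (find (fun x => (c <= x)%R) w < size w)%N by apply: leq_ltn_trans hj.
have hc : (c <= nth 0 w (find (fun x => (c <= x)%R) w)) by apply: nth_find; rewrite has_find.
apply: le_trans hc _.
by apply: (sorted_leq_nth le_trans lexx) => //; rewrite inE.
Qed.

Section PiE.
Variables (F : fieldType) (R : realFieldType) (m : nat).

Definition zb (g : seq ({set 'I_m} * R)) k i t : int :=
  (\rank (Zmx F g k i + Bmx F g k t)%MS)%:Z.
Definition del g k i t := zb g k i t - zb g k i.-1 t.
Definition thr (g : seq ({set 'I_m} * R)) (alpha : R) i :=
  find (fun x => alpha * nth 0 (wts g) i.-1 <= x) (wts g).

Lemma pbettiE g k i j :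
  pbetti F g k i j = zb g k i j - (\rank (Bmx F g k j))%:Z.
Proof.
rewrite /pbetti /zb; have := mxrank_sum_cap (Zmx F g k i) (Bmx F g k j); lia.
Qed.

Lemma PiE g k alpha : sorted (fun x y : R => x <= y) (wts g) ->
  Pi F g k alpha = \sum_(1 <= i < (size g).+1) del g k i (maxn i (thr g alpha i)).
Proof.
move=> sw; rewrite /Pi -big_split /=; apply: eq_big_nat => i /andP[i1 iN].
have sz : size (wts g) = size g by rewrite size_map.
rewrite -(@tele_lem (fun t => del g k i t) (thr g alpha i) i (size g)) //; last first.
  by rewrite /thr -sz find_size.
congr (_ + _); last first.
  by rewrite /pmult_inf !pbettiE /del; lia.
apply: eq_big_nat => j /andP[ij jN].
have j1 : (j.-1 < size (wts g))%N by rewrite sz; lia.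
rewrite (find_sorted_le _ sw j1) -/(thr g alpha i).
have -> : (thr g alpha i <= j.-1)%N = (thr g alpha i < j)%N by lia.
case: ifP => // _.
by rewrite /pmult !pbettiE /del; lia.
Qed.

End PiE.


Lemma nth_ins T (x0 y : T) (l : seq T) p j : (p <= size l)%N ->
  nth x0 (take p l ++ y :: drop p l) j =
  if (j < p)%N then nth x0 l j else if j == p then y else nth x0 l j.-1.
Proof.
move=> hp; rewrite nth_cat size_takel //; case: ltnP => hj.
  by rewrite nth_take.
case: (eqVneq j p) => [->|njp]; first by rewrite subnn.
have -> : (j - p = (j.-1 - p).+1)%N by lia.
by rewrite /= nth_drop; congr nth; lia.
Qed.

Section Ins.
Variables (F : fieldType) (R : realFieldType) (m : nat) (f : seq ({set 'I_m} * R))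
  (sigma : {set 'I_m}) (w : R) (p : nat).
Hypothesis hp : (p <= size f)%N.

Local Notation f' := (finsert p (sigma, w) f).

Lemma simps_ins : simps f' = take p (simps f) ++ sigma :: drop p (simps f).
Proof. by rewrite /simps /finsert map_cat map_take /= map_drop. Qed.
Lemma wts_ins : wts f' = take p (wts f) ++ w :: drop p (wts f).
Proof. by rewrite /wts /finsert map_cat map_take /= map_drop. Qed.

Lemma eN : size f' = (size f).+1.
Proof. by rewrite /finsert size_cat /= size_takel // size_drop; lia. Qed.

Lemma iot_lt (a : 'I_(size f)) : (bump p a < size f')%N.
Proof. by rewrite eN /bump; case: (p <= a)%N => /=; rewrite ?add0n ?add1n ltnS // ltnW. Qed.
Definition iot (a : 'I_(size f)) : 'I_(size f') := Ordinal (iot_lt a).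
Lemma q_lt : (p < size f')%N. Proof. by rewrite eN ltnS. Qed.
Definition qq : 'I_(size f') := Ordinal q_lt.

Lemma iot_inj : injective iot.
Proof. by move=> a b /(congr1 val) /= /(can_inj (bumpK p)) /val_inj. Qed.
Lemma iot_q a : iot a != qq.
Proof. by apply/eqP => /(congr1 val) /= /eqP; rewrite eq_sym (negbTE (neq_bump _ _)). Qed.
Lemma iot_surj b : b != qq -> exists a, iot a = b.
Proof.
move=> nb; have nb' : (val b != p) by [].
have ha : (unbump p b < size f)%N.
  have hb : (val b < (size f).+1)%N by rewrite -eN ltn_ord.
  rewrite /unbump; move: nb' hb; case: (ltngtP p b) => //= h _ hb; lia.
exists (Ordinal ha); apply: val_inj => /=.
by rewrite unbumpK //= inE.
Qed.

Lemma s_iot a : nth set0 (simps f') (iot a) = nth set0 (simps f) a.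
Proof.
rewrite simps_ins nth_ins ?size_map //= /bump.
case: (leqP p a) => h /=.
  by rewrite ifF; [rewrite ifF //; apply/negbTE; lia | lia].
by rewrite add0n h.
Qed.

Lemma s_q : nth set0 (simps f') qq = sigma.
Proof. by rewrite simps_ins nth_ins ?size_map //= ltnn eqxx. Qed.

Definition kap I := if (I <= p)%N then I else I.-1.

Lemma w_kap I : (1 <= I)%N -> I != p.+1 ->
  nth 0 (wts f') I.-1 = nth 0 (wts f) (kap I).-1.
Proof.
move=> I1 nI; rewrite wts_ins nth_ins ?size_map // /kap.
case: (leqP I p) => h.
  by rewrite ifT //; lia.
rewrite ifF; last lia.
rewrite ifF; last by apply/negbTE; lia.
done.
Qed.

Lemma bump_kap (a : nat) I : (bump p a < I)%N = (a < kap I)%N.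
Proof. rewrite /bump /kap; case: (leqP p a) => ha; case: (leqP I p) => hI /=; rewrite ?add0n ?add1n; lia. Qed.

Lemma kap_max a b : kap (maxn a b) = maxn (kap a) (kap b).
Proof. rewrite /kap ?geq_max; case: (leqP a p) => ha; case: (leqP b p) => hb /=; lia. Qed.

Lemma kap_mono a b : (a <= b)%N -> (kap a <= kap b)%N.
Proof. rewrite /kap ?geq_max; case: (leqP a p) => ha; case: (leqP b p) => hb /=; lia. Qed.

End Ins.


Lemma Cmx_dg (F : fieldType) (R : realFieldType) m (g : seq ({set 'I_m} * R)) k i :
  Cmx F g k i = dg F (fun a => (a < i)%N && (sdim (nth set0 (simps g) a) == k)).
Proof. by apply/matrixP => a b; rewrite !mxE andbA. Qed.

Lemma Cmx_mono (F : fieldType) (R : realFieldType) m (g : seq ({set 'I_m} * R)) k i j :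
  (i <= j)%N -> (Cmx F g k i <= Cmx F g k j)%MS.
Proof.
move=> ij; rewrite !Cmx_dg; apply: dg_sub => b /andP[hb ->]; rewrite andbT.
exact: leq_trans hb ij.
Qed.

Lemma Zmx_mono (F : fieldType) (R : realFieldType) m (g : seq ({set 'I_m} * R)) k i j :
  (i <= j)%N -> (Zmx F g k i <= Zmx F g k j)%MS.
Proof. by move=> ij; apply: capmxS => //; apply: Cmx_mono. Qed.

Lemma Bmx_mono (F : fieldType) (R : realFieldType) m (g : seq ({set 'I_m} * R)) k i j :
  (i <= j)%N -> (Bmx F g k i <= Bmx F g k j)%MS.
Proof. by move=> ij; apply: submxMr; apply: Cmx_mono. Qed.

Section Ins2.
Variables (F : fieldType) (R : realFieldType) (m : nat) (f : seq ({set 'I_m} * R))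
  (sigma : {set 'I_m}) (w : R) (p : nat) (k : nat).
Hypothesis hp : (p <= size f)%N.
Hypothesis ff : is_filtration f.
Hypothesis ff' : is_filtration (finsert p (sigma, w) f).
Hypothesis notin : sigma \notin simps f.

Local Notation f' := (finsert p (sigma, w) f).
Local Notation io := (@iot R m f sigma w p hp).
Local Notation q := (@qq R m f sigma w p hp).
Local Notation E := (Emx F io).
Local Notation inj := (@iot_inj R m f sigma w p hp).
Local Notation ioq := (@iot_q _ _ f sigma w p hp).
Local Notation sur := (@iot_surj _ _ f sigma w p hp).

Lemma sigma_nz : sigma != set0.
Proof.
case: ff' => _ /allP H _ _; apply: H.
by rewrite simps_ins // mem_cat in_cons eqxx orbT.
Qed.

Lemma D_iot a b : Dmx F f' (io a) (io b) = Dmx F f a b.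
Proof. by rewrite !mxE !s_iot. Qed.

Lemma D_q a : Dmx F f' (io a) q = 0.
Proof.
rewrite mxE s_iot s_q /bcoef big1 // => v /andP[vs /eqP e].
exfalso; case: ff => _ _ _ /(_ a (ltn_ord a) sigma sigma_nz).
rewrite e properD1 // => /(_ isT) [j ja].
rewrite -e => ej; move/negP: notin; apply.
rewrite -ej; apply: mem_nth; rewrite size_map; exact: ltn_trans ja (ltn_ord a).
Qed.

Lemma EDc : E *m Dmx F f' = Dmx F f *m E.
Proof. exact: (ED_comm inj ioq sur D_iot D_q). Qed.

Lemma CE k' I : (Cmx F f k' (kap p I) *m E :=: Cmx F f' k' I :&: E)%MS.
Proof. by rewrite !Cmx_dg; apply: (@dgE F _ _ _ _ inj ioq sur) => a; rewrite s_iot /= (bump_kap hp). Qed.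

Lemma ZE I : (Zmx F f k (kap p I) *m E :=: Zmx F f' k I :&: E)%MS.
Proof.
apply: eqmx_trans (capME inj _ _) _.
apply: eqmx_trans (cap_eqmx (CE _ _) (kerME inj EDc)) _.
exact: capcapE.
Qed.

Lemma Csub k' I : sdim sigma != k' -> (Cmx F f' k' I <= E)%MS.
Proof.
move=> ns; apply/row_subP => i; rewrite (subE inj ioq sur) !mxE.
case: (eqVneq i q) => [->|ni] //.
by rewrite s_q (negbTE ns) andbF.
Qed.

Lemma Zsub I : sdim sigma != k -> (Zmx F f' k I <= E)%MS.
Proof. by move=> ns; apply: submx_trans (capmxSl _ _) (Csub _ ns). Qed.

Lemma Zsame I : sdim sigma != k -> (Zmx F f k (kap p I) *m E :=: Zmx F f' k I)%MS.
Proof. by move=> ns; apply: eqmx_trans (ZE I) _; apply/capmx_idPl/Zsub. Qed.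

Lemma BE T : (Bmx F f k (kap p T) *m E :=: (Cmx F f' k.+1 T :&: E) *m Dmx F f')%MS.
Proof.
rewrite /Bmx -mulmxA -EDc mulmxA.
exact: eqmxMr (CE _ _).
Qed.

Lemma Bsame T : sdim sigma != k.+1 -> (Bmx F f k (kap p T) *m E :=: Bmx F f' k T)%MS.
Proof.
move=> ns; apply: eqmx_trans (BE T) _; apply: eqmxMr.
by apply/capmx_idPl/Csub.
Qed.

Definition Wm := dg F (pred1 q) *m Dmx F f'.

Lemma rank_Wm : (\rank Wm <= 1)%N.
Proof.
apply: leq_trans (mxrankM_maxl _ _) _.
have -> : dg F (pred1 q) = delta_mx q q.
  by apply/matrixP => a b; rewrite !mxE /=; case: (eqVneq a q) => [->|]; rewrite ?andbF // andbT eq_sym.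
by rewrite mxrank_delta.
Qed.

Lemma Bsplit T : sdim sigma == k.+1 ->
  (Bmx F f' k T :=: Bmx F f k (kap p T) *m E + (if (p < T)%N then Wm else 0))%MS.
Proof.
move=> es; have hb := BE T; rewrite /Bmx !Cmx_dg in hb *.
set c := (fun a : 'I_(size f') => (a < T)%N && (sdim (nth set0 (simps f') a) == k.+1)) in hb *.
have e1 : (dg F c :=: dg F (fun b => c b && (b != q)) + dg F (fun b => c b && (b == q)))%MS.
  apply: dg_split => b; case: (c b); case: (eqVneq b q) => //.
have e2 : dg F (fun b => c b && (b == q)) = if (p < T)%N then dg F (pred1 q) else 0.
  have e3 : sdim (nth set0 (simps f') q) = sdim sigma by rewrite (s_q sigma w hp).
  have e4 : (q < T)%N = (p < T)%N by [].
  apply/matrixP => a b; rewrite /c; case: (eqVneq a q) => [->|na]; case: ifP => hT;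
    by rewrite !mxE /= ?eqxx ?andbT ?andbF ?(negbTE na) ?e3 ?e4 ?es ?hT ?andbT ?andbF.
apply: eqmx_trans (eqmxMr (Dmx F f') e1) _; apply: eqmx_trans (addsmxMr _ _ _) _.
apply: adds_eqmx.
  apply: eqmx_sym; apply: eqmx_trans hb _; apply: eqmxMr; apply: eqmx_sym.
  exact: (@dg_capE F _ _ _ _ inj ioq sur).
rewrite e2; case: ifP => _; first exact: eqmx_refl.
rewrite mul0mx; exact: eqmx_refl.
Qed.

End Ins2.


Lemma tele_int (g : nat -> int) M :
  \sum_(1 <= I < M.+1) (g I - g I.-1) = g M - g 0%N.
Proof.
elim: M => [|M IH]; first by rewrite big_geq // subrr.
rewrite big_nat_recr //= IH; lia.
Qed.

Lemma comb_c (h : nat -> nat -> int) (T : nat -> nat) p M :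
  (forall I t, 0 <= h I t <= 1) ->
  (forall I J t, (I <= J)%N -> h J t <= h I t) ->
  (forall I t t', (p < t)%N -> (t <= t')%N -> h I t' <= h I t) ->
  (forall I t, (t <= p)%N -> h I t = 0) ->
  (forall I J, (I <= J)%N -> (J <= M)%N -> (T I <= T J)%N) ->
  -1 <= \sum_(1 <= I < M.+1) (h I (T I) - h I.-1 (T I)) <= 0.
Proof.
move=> h01 hI ht hp hT; apply/andP; split; last first.
  by rewrite big_nat sumr_le0 // => I _; rewrite subr_le0 hI // leq_pred.
suff [_ H] : ((T M <= p)%N -> \sum_(1 <= I < M.+1) (h I (T I) - h I.-1 (T I)) = 0) /\
  (-1 <= \sum_(1 <= I < M.+1) (h I (T I) - h I.-1 (T I)) - h M (T M)).
  by move: (h01 M (T M)) H => /andP[h0 h1]; lia.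
have : (M <= M)%N by [].
elim: {-2}M => [|M' IH] hM.
  rewrite big_geq //; split => //.
  by move: (h01 0%N (T 0%N)) => /andP[h0 h1]; lia.
have {IH} [IH1 IH2] := IH (ltnW hM).
rewrite big_nat_recr //=.
set S := (\sum_(1 <= I < M'.+1) (h I (T I) - h I.-1 (T I))) in IH1 IH2 *.
split.
  move=> hTM; have hTM' : (T M' <= p)%N := leq_trans (hT _ _ (leqnSn _) hM) hTM.
  by rewrite IH1 // !hp // subrr addr0.
case: (leqP (T M') p) => hTM.
  rewrite IH1 // add0r; move: (h01 M' (T M'.+1)) => /andP[h0 h1]; lia.
have := ht M' _ _ hTM (hT _ _ (leqnSn _) hM); lia.
Qed.

Lemma find_mono T (P1 P2 : pred T) (s : seq T) :
  (forall x, P2 x -> P1 x) -> (find P1 s <= find P2 s)%N.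
Proof.
move=> H; elim: s => //= x s IH.
case h2: (P2 x); first by rewrite (H _ h2).
by case: (P1 x).
Qed.

Lemma sum_skip (G H : nat -> int) n N' p : N' = n.+1 -> (p <= n)%N ->
  G p.+1 = 0 -> (forall I, (1 <= I <= p)%N -> G I = H I) ->
  (forall I, (p.+2 <= I <= n.+1)%N -> G I = H I.-1) ->
  \sum_(1 <= I < N'.+1) G I = \sum_(1 <= i < n.+1) H i.
Proof.
move=> -> hp G0 H1 H2.
have a1 : (1 <= p.+1)%N by [].
have b1 : (p.+1 <= n.+2)%N by lia.
have b2 : (p.+1 <= n.+1)%N by lia.
rewrite (@big_cat_nat _ _ _ p.+1 1 n.+2 _ _ a1 b1).
rewrite [in RHS](@big_cat_nat _ _ _ p.+1 1 n.+1 _ _ a1 b2).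
congr (_ + _); first by apply: eq_big_nat => I /andP[a b]; apply: H1; rewrite a -ltnS b.
rewrite big_ltn; last by lia.
rewrite G0 /= add0r big_add1 /=.
by apply: eq_big_nat => I /andP[a b]; rewrite H2 //=; lia.
Qed.


Lemma thr_mono (R : realFieldType) m (g : seq ({set 'I_m} * R)) alpha I J :
  0 <= alpha -> sorted (fun x y : R => x <= y) (wts g) -> (I <= J)%N -> (J <= size g)%N ->
  (thr g alpha I <= thr g alpha J)%N.
Proof.
move=> a0 sw IJ Jn; apply: find_mono => x; apply: le_trans.
apply: ler_wpM2l => //.
case: J IJ Jn => [|J]; first by rewrite leqn0 => /eqP ->.
move=> IJ Jn; apply: (sorted_leq_nth le_trans lexx) => //; rewrite ?inE ?size_map; lia.
Qed.

Section Main.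
Variables (F : fieldType) (R : realFieldType) (m : nat) (f : seq ({set 'I_m} * R))
  (sigma : {set 'I_m}) (w : R) (p : nat) (k : nat) (alpha : R).
Hypothesis hp : (p <= size f)%N.
Hypothesis ff : is_filtration f.
Hypothesis ff' : is_filtration (finsert p (sigma, w) f).
Hypothesis notin : sigma \notin simps f.
Hypothesis a0 : 0 <= alpha.

Local Notation f' := (finsert p (sigma, w) f).
Local Notation io := (@iot R m f sigma w p hp).
Local Notation E := (Emx F io).

Lemma sw' : sorted (fun x y : R => x <= y) (wts f'). Proof. by case: ff'. Qed.
Lemma sw : sorted (fun x y : R => x <= y) (wts f). Proof. by case: ff. Qed.

Lemma kap_find (P : pred R) : (forall x y, x <= y -> P x -> P y) ->
  kap p (find P (wts f')) = find P (wts f).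
Proof.
move=> Pup; have sw1 := sw'; rewrite wts_ins in sw1 *.
have e : find P (wts f) = find P (take p (wts f) ++ drop p (wts f)) by rewrite cat_take_drop.
have sz : size (take p (wts f)) = p by rewrite size_takel // size_map.
rewrite e !find_cat sz; case: ifP => hh.
  by rewrite /kap ifT //; apply: ltnW; rewrite -{2}sz -has_find.
rewrite /=; case Pw: (P w).
  rewrite addn0 /kap leqnn; case ed: (drop p (wts f)) => [|x s] /=; first by rewrite addn0.
  move: sw1; rewrite ed sorted_cat_cons => /andP[_ /= /andP[wx _]].
  by rewrite (Pup _ _ wx Pw) addn0.
by rewrite /kap addnS ifF //; lia.
Qed.

Definition Tn I := maxn I (thr f' alpha I).

Lemma Tn_mono I J : (I <= J)%N -> (J <= size f')%N -> (Tn I <= Tn J)%N.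
Proof. move=> IJ Jn; have := thr_mono a0 sw' IJ Jn; rewrite /Tn; lia. Qed.

Definition Zo I := Zmx F f k (kap p I) *m E.
Definition Bo t := Bmx F f k (kap p t) *m E.
Definition r0 I t : int := (\rank (Zo I + Bo t)%MS)%:Z.

Lemma r0E I t : r0 I t = zb F f k (kap p I) (kap p t).
Proof.
rewrite /r0 /zb /Zo /Bo -addsmxMr.
by rewrite mxrankMfree //; apply: Efree; apply: iot_inj.
Qed.

Lemma kap_Tn I : (1 <= I)%N -> I != p.+1 ->
  kap p (Tn I) = maxn (kap p I) (thr f alpha (kap p I)).
Proof.
move=> I1 nI; rewrite /Tn (kap_max hp) /thr (w_kap sigma w hp I1 nI) kap_find //.
by move=> x y xy h; apply: le_trans h xy.
Qed.

Lemma old_sum : Pi F f k alpha =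
  \sum_(1 <= I < (size f').+1) (r0 I (Tn I) - r0 I.-1 (Tn I)).
Proof.
rewrite (PiE F k alpha sw); symmetry.
apply: (sum_skip (eN sigma w hp) hp).
- rewrite !r0E /= (_ : kap p p.+1 = p); last by rewrite /kap ifF //; lia.
  by rewrite (_ : kap p p = p) ?subrr // /kap leqnn.
- move=> I /andP[I1 Ip]; rewrite !r0E kap_Tn //; last by lia.
  have -> : kap p I = I by rewrite /kap Ip.
  by rewrite (_ : kap p I.-1 = I.-1) // /kap ifT //; lia.
- move=> I /andP[I1 Ip]; rewrite !r0E kap_Tn //; try lia.
  have -> : kap p I = I.-1 by rewrite /kap ifF //; lia.
  by rewrite (_ : kap p I.-1 = I.-1.-1) // /kap ifF //; lia.
Qed.

Definition r1 I t : int := zb F f' k I t.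

Lemma diff_sum : Pi F f' k alpha - Pi F f k alpha =
  \sum_(1 <= I < (size f').+1)
    ((r1 I (Tn I) - r1 I.-1 (Tn I)) - (r0 I (Tn I) - r0 I.-1 (Tn I))).
Proof. by rewrite old_sum (PiE F k alpha sw') -sumrB. Qed.

Lemma case_a : sdim sigma != k -> sdim sigma != k.+1 ->
  Pi F f' k alpha = Pi F f k alpha.
Proof.
move=> nk nk1; apply/eqP; rewrite -subr_eq0 diff_sum; apply/eqP.
rewrite big1_seq // => I _.
suff e : forall J t, r1 J t = r0 J t by rewrite !e subrr.
move=> J t; rewrite /r1 /r0 /zb /Zo /Bo.
by rewrite (adds_eqmx (Zsame F hp ff ff' notin J nk) (Bsame F hp ff ff' notin t nk1)).
Qed.

Lemma case_b : sdim sigma == k ->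
  Pi F f k alpha - 1 <= Pi F f' k alpha <= Pi F f k alpha + 1.
Proof.
move=> ek.
have nk1 : sdim sigma != k.+1 by rewrite (eqP ek); elim: k {ek} => // k' IH; rewrite eqSS.
pose g I : int := (\rank (Zmx F f' k I))%:Z - (\rank (Zo I))%:Z.
have hg : forall I t, r1 I t - r0 I t = g I.
  move=> I t; have hB := Bsame F hp ff ff' notin t nk1.
  have sB : (Bmx F f' k t <= E)%MS by rewrite -hB submxMl.
  have := rank_cap_trick (ZE F k hp ff ff' notin I) sB.
  rewrite /r1 /r0 /g /zb /Zo -/(Bo t) (adds_eqmx (eqmx_refl (Zo I)) hB) /Zo; lia.
have g01 : forall I, 0 <= g I <= 1.
  move=> I; have e := ZE F k hp ff ff' notin I.
  have h1 : (\rank (Zo I) <= \rank (Zmx F f' k I))%N.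
    by apply: mxrankS; rewrite /Zo e capmxSl.
  have h2 := rank_hyper (Zmx F f' k I) (eN sigma w hp) (Efree F (@iot_inj R m f sigma w p hp)).
  rewrite -/(Zo I) in e; rewrite -e in h2.
  rewrite /g; lia.
have : Pi F f' k alpha - Pi F f k alpha = g (size f') - g 0%N.
  rewrite diff_sum -tele_int; apply: eq_big_nat => I _.
  by rewrite -(hg I (Tn I)) -(hg I.-1 (Tn I)); lia.
move: (g01 (size f')) (g01 0%N) => /andP[? ?] /andP[? ?]; lia.
Qed.

Lemma case_c : sdim sigma == k.+1 ->
  Pi F f k alpha - 1 <= Pi F f' k alpha <= Pi F f k alpha + 1.
Proof.
move=> ek.
have nk : sdim sigma != k by rewrite (eqP ek); elim: k {ek} => // k' IH; rewrite eqSS.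
pose W t := if (p < t)%N then Wm F sigma w hp else 0.
have rW : forall t, (\rank (W t) <= 1)%N.
  by move=> t; rewrite /W; case: ifP => _; rewrite ?mxrank0 ?rank_Wm.
pose X I t := (Zmx F f' k I + Bo t)%MS.
have r1c : forall I t, r1 I t = (\rank (X I t + W t)%MS)%:Z.
  move=> I t; rewrite /r1 /zb (adds_eqmx (eqmx_refl (Zmx F f' k I)) (Bsplit F hp ff ff' notin t ek)) /X addsmxA //.
have r0c : forall I t, r0 I t = (\rank (X I t))%:Z.
  by move=> I t; rewrite /r0 /X (adds_eqmx (Zsame F hp ff ff' notin I nk) (eqmx_refl (Bo t))).
pose h I t := r1 I t - r0 I t.
have hsub : forall I J t t', (X I t <= X J t')%MS -> W t' = W t -> h J t' <= h I t.
  move=> I J t t' sX eW; rewrite /h !r1c !r0c eW.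
  have := rank_submod (W t) sX; lia.
have h01 : forall I t, 0 <= h I t <= 1.
  move=> I t; rewrite /h r1c r0c.
  have := rank_adds_le (X I t) (W t); have := rW t.
  have : (\rank (X I t) <= \rank (X I t + W t)%MS)%N by apply: mxrankS; apply: addsmxSl.
  lia.
have hA : forall I J t, (I <= J)%N -> h J t <= h I t.
  move=> I J t IJ; apply: hsub => //; apply: addsmxS => //; exact: Zmx_mono.
have hB : forall I t t', (p < t)%N -> (t <= t')%N -> h I t' <= h I t.
  move=> I t t' pt tt'; apply: hsub.
    by apply: addsmxS => //; apply: submxMr; apply: Bmx_mono; apply: (kap_mono hp).
  by rewrite /W !ifT //; apply: leq_trans tt'.
have hC : forall I t, (t <= p)%N -> h I t = 0.
  move=> I t tp; rewrite /h r1c r0c /W ifF; last by rewrite ltnNge tp.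
  by rewrite addsmx0 subrr.
have := @comb_c h Tn p (size f') h01 hA hB hC (fun I J IJ JN => Tn_mono IJ JN).
have -> : \sum_(1 <= I < (size f').+1) (h I (Tn I) - h I.-1 (Tn I)) =
   Pi F f' k alpha - Pi F f k alpha.
  by rewrite diff_sum; apply: eq_big_nat => I _; rewrite /h; lia.
lia.
Qed.

End Main.

Unset Implicit Arguments. Set Strict Implicit.

Theorem lemma6p2 (F : fieldType) (R : realFieldType) (m : nat)
    (f : seq ({set 'I_m} * R)) (sigma : {set 'I_m}) (w : R) (p k : nat)
    (alpha : R) :
  is_filtration f ->
  sigma \notin simps f ->
  (p <= size f)%N ->
  is_filtration (finsert p (sigma, w) f) ->
  births_positive (finsert p (sigma, w) f) ->
  (1 <= k)%N -> 1 < alpha ->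
  ((sdim sigma == k) || (sdim sigma == k.+1) ->
    Pi F f k alpha - 1 <= Pi F (finsert p (sigma, w) f) k alpha <= Pi F f k alpha + 1)
  /\ (~~ ((sdim sigma == k) || (sdim sigma == k.+1)) ->
    Pi F (finsert p (sigma, w) f) k alpha = Pi F f k alpha).
Proof.
move=> ff nin hp ff' _ k1 a1.
have a0 : 0 <= alpha by apply: ltW (lt_trans ltr01 a1).
split.
  case/orP => e; [apply: case_b | apply: case_c]; eassumption.
rewrite negb_or => /andP[nk nk1]; apply: case_a; eassumption.
Qed.
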